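(* There exist infinitely many pairs $(a,b)$ of integers such that (i) $a\ge 36$ and $a$ is even, and $b\ge 21$ and $b$ is odd; (ii) $3b(b-1)=a(a-1)$; and (iii) $b\le 7a/12$. *)

(* Defs.v *)
From Stdlib Require Import ZArith Ensembles Finite_sets.
Open Scope Z_scope.

(* The conditions (i)-(iii) on a pair (a,b) of integers.
   (iii) b <= 7a/12 over the rationals is written as 12*b <= 7*a. *)
Definition good_pair (a b : Z) : Prop :=
  (36 <= a /\ Z.Even a /\ 21 <= b /\ Z.Odd b) /\
  3 * b * (b - 1) = a * (a - 1) /\
  12 * b <= 7 * a.

Definition good_pairs : Ensemble (Z * Z) := fun p => good_pair (fst p) (snd p).

(* Main.v *)
Require Import Defs.
From Stdlib Require Import ZArith Ensembles Finite_sets Lia Psatz.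

Definition S (p : Z * Z) : Z * Z :=
  (97 * fst p + 168 * snd p - 132, 56 * fst p + 97 * snd p - 76).

Fixpoint seqp (n : nat) : Z * Z :=
  match n with O => (36, 21) | Datatypes.S n => S (seqp n) end.

Definition inv (p : Z * Z) : Prop :=
  36 <= fst p /\ Z.Even (fst p) /\ 21 <= snd p /\ Z.Odd (snd p) /\
  3 * snd p * (snd p - 1) = fst p * (fst p - 1).

Lemma inv_S p : inv p -> inv (S p) /\ fst p < fst (S p).
Proof.
  destruct p as [a b]; unfold inv, S; cbn [fst snd].
  intros (H1 & [k Hk] & H3 & [m Hm] & H5).
  subst a b.
  cbn [fst snd]. split; [|lia].
  split; [lia|]. split; [exists (97 * k + 168 * m + 18); lia|].
  split; [lia|]. split; [exists (56 * k + 97 * m + 10); lia|].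
  nia.
Qed.

Lemma inv_seq n : inv (seqp n).
Proof.
  induction n; simpl.
  - unfold inv; cbn [fst snd]. split; [lia|]. split; [exists 18; lia|].
    split; [lia|]. split; [exists 10; lia|]. lia.
  - apply inv_S; auto.
Qed.

Lemma seq_ge n : Z.of_nat n <= fst (seqp n).
Proof.
  induction n as [|n IHn].
  - simpl; lia.
  - rewrite Nat2Z.inj_succ. change (seqp (Datatypes.S n)) with (S (seqp n)). pose proof (proj2 (inv_S _ (inv_seq n))). lia.
Qed.

Lemma inv_good p : inv p -> good_pair (fst p) (snd p).
Proof.
  destruct p as [a b]; unfold inv, good_pair; cbn [fst snd].
  intros (H1 & H2 & H3 & H4 & H5).
  split; [tauto|]. split; [auto|].
  destruct (Z_le_gt_dec (12 * b) (7 * a)); auto.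
  exfalso. nia.
Qed.

Lemma finite_bounded (A : Ensemble (Z * Z)) :
  Finite _ A -> exists M, forall p, In _ A p -> fst p <= M.
Proof.
  induction 1 as [|A HA [M HM] x Hx].
  - exists 0. intros p Hp; destruct Hp.
  - exists (Z.max M (fst x)). intros p Hp. destruct Hp as [p Hp | p Hp].
    + specialize (HM p Hp); lia.
    + destruct Hp; lia.
Qed.

Theorem lemma4p4 : ~ Finite (Z * Z) good_pairs.
Proof.
  intro HF. destruct (finite_bounded _ HF) as [M HM].
  pose (n := Z.to_nat (M + 1)).
  assert (Hin : In _ good_pairs (seqp n)).
  { unfold In, good_pairs. apply inv_good, inv_seq. }
  specialize (HM _ Hin). pose proof (seq_ge n). unfold n in *. lia.
Qed.
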